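(* Let $(\mathcal G,\Delta,\{V^i,U^i\}_{i=1}^n)$ be a partition exchange economy with cycle bound $\Delta\ge 2$. Then there exists a fractional exchange $y^*\in[0,1]^{\mathcal C_\Delta}$ in $\mathcal G$ with the following property: for every finite set $V^0$ of additional altruistic donors (with any choice of their out-arcs) and every exchange $\mathcal E^*$ in $\mathcal G^{+V^0}$, if $$u_i(\mathcal E^* )\ \ge\ \Big\lfloor \sum_{c\in\mathcal C_\Delta}\gamma^i_c\,y^*_c\Big\rfloor\quad\text{for all } i\in N,$$ then $\mathcal E^*$ belongs to the $V^0$-supplemented core.
   Context: A partition exchange economy $(\mathcal G,\Delta,\{V^i,U^i\}_{i=1}^n)$ consists of: a set of organizations $N=\{1,\dots,n\}$; pairwise disjoint finite sets $V^1,\dots,V^n$ with $V=V^1\cup\dots\cup V^n$; subsets $U^i\subseteq V^i$ (the patient vertices of organization $i$; vertices of $V^i\setminus U^i$ are altruistic donors); a directed compatibility graph $\mathcal G=(V,E)$ without loops (arc $(u,v)$: the donor of $u$ can give to the patient of $v$); and an integer cycle bound $\Delta\ge 2$. $\mathcal C_\Delta$ denotes the set of directed cycles of $\mathcal G$ of length at most $\Delta$. For $W\subseteq V$, an exchange among $W$ is a set of pairwise vertex-disjoint directed cycles of length at most $\Delta$ in the induced subgraph $\mathcal G[W]$. A fractional exchange is a vector $y\in[0,1]^{\mathcal C_\Delta}$ with $\sum_{c\in\mathcal C_\Delta:\,v\in c}y_c\le 1$ for every $v\in V$. For a cycle $c$ and organization $i$, $\gamma^i_c=|U^i\cap c|$.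 The utility of organization $i$ from an exchange $\mathcal E$ is $u_i(\mathcal E)$, the number of vertices of $U^i$ lying on cycles of $\mathcal E$. Additional altruistic donors: given a finite set $V^0$ of new vertices (belonging to no organization), the extended graph $\mathcal G^{+V^0}$ is obtained from $\mathcal G$ by adding the vertices of $V^0$, an arc from every other vertex into each $a\in V^0$, and for each $a\in V^0$ arcs from $a$ to an arbitrarily chosen set of vertices; an exchange in $\mathcal G^{+V^0}$ is a set of vertex-disjoint directed cycles of length at most $\Delta$ in $\mathcal G^{+V^0}$. A nonempty coalition $P\subseteq N$ blocks an exchange $\mathcal E$ (of $\mathcal G$ or $\mathcal G^{+V^0}$) if there is an exchange $\mathcal E'$ among $\bigcup_{i\in P}V^i$ (in $\mathcal G$, so vertices of $V^0$ cannot be used) with $u_i(\mathcal E')>u_i(\mathcal E)$ for all $i\in P$. An exchange $\mathcal E^*$ in $\mathcal G^{+V^0}$ is in the $V^0$-supplemented core if no nonempty coalition $P\subseteq N$ blocks it. *)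

(* Defs.v *)
From HB Require Import structures.
From mathcomp Require Import all_boot all_order all_algebra.
From mathcomp Require Import reals.
Set Implicit Arguments. Unset Strict Implicit. Unset Printing Implicit Defensive.
Import Order.TTheory GRing.Theory Num.Theory.

(* A directed cycle in a digraph on a finite vertex type T is encoded by its
   successor map: c v = Some w iff v lies on the cycle and its successor is w.
   This is a bijective encoding of directed cycles (no rotation duplicates). *)
Definition cyc (T : finType) := {ffun T -> option T}.

Definition on_cyc (T : finType) (c : cyc T) (v : T) : bool := c v != None.
Definition cyc_succ (T : finType) (c : cyc T) (v : T) : T := odflt v (c v).

Definition is_cycle (T : finType) (e : rel T) (D : nat) (c : cyc T) : bool :=
  [&& [exists v, on_cyc c v],
      [forall v, forall w, (c v == Some w) ==> (e v w && on_cyc c w)],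
      [forall u, forall v, (on_cyc c u && on_cyc c v) ==> fconnect (cyc_succ c) u v]
    & #|[set v | on_cyc c v]| <= D].

Definition exchange (T : finType) (e : rel T) (D : nat) (W : {set T})
    (X : {set cyc T}) : Prop :=
  (forall c, c \in X -> is_cycle e D c /\ (forall v, on_cyc c v -> v \in W)) /\
  (forall c1 c2, c1 \in X -> c2 \in X -> c1 != c2 ->
     forall v, ~~ (on_cyc c1 v && on_cyc c2 v)).

Definition covered (T : finType) (X : {set cyc T}) (v : T) : bool :=
  [exists c in X, on_cyc c v].

(* Partition exchange economy data: vertex type V, org : V -> 'I_n (so
   V^i = org^-1 i), patients U (so U^i = U :&: V^i), arcs E, cycle bound D. *)

Definition util (V : finType) (n : nat) (org : V -> 'I_n) (U : {set V})
    (i : 'I_n) (X : {set cyc V}) : nat :=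
  #|[set v in U | (org v == i) && covered X v]|.

(* extended graph G^{+V0}, with V0 encoded as the finite type A:
   arcs from every other vertex into each a in V0, arcs from a in V0 to
   the original vertices chosen by out. *)
Definition ext_graph (V A : finType) (E : rel V) (out : A -> V -> bool)
    : rel (V + A)%type :=
  fun x y => match y with
             | inr _ => x != y
             | inl w => match x with
                        | inl u => E u w
                        | inr a => out a w
                        end
             end.

Definition util_ext (V A : finType) (n : nat) (org : V -> 'I_n) (U : {set V})
    (i : 'I_n) (X : {set cyc (V + A)%type}) : nat :=
  #|[set v in U | (org v == i) && covered X (inl v)]|.

Definition blocks (V A : finType) (n : nat) (org : V -> 'I_n) (U : {set V})
    (E : rel V) (D : nat) (P : {set 'I_n}) (X : {set cyc (V + A)%type}) : Prop :=
  exists X' : {set cyc V},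
    exchange E D [set v | org v \in P] X' /\
    (forall i, i \in P -> util_ext org U i X < util org U i X')%N.

Definition in_supp_core (V A : finType) (n : nat) (org : V -> 'I_n)
    (U : {set V}) (E : rel V) (D : nat) (X : {set cyc (V + A)%type}) : Prop :=
  forall P : {set 'I_n}, P != set0 -> ~ blocks org U E D P X.

Definition gamma (V : finType) (n : nat) (org : V -> 'I_n) (U : {set V})
    (i : 'I_n) (c : cyc V) : nat :=
  #|[set v in U | (org v == i) && on_cyc c v]|.

Local Open Scope ring_scope.

Definition frac_exchange (R : realType) (V : finType) (E : rel V) (D : nat)
    (y : cyc V -> R) : Prop :=
  (forall c, is_cycle E D c -> 0 <= y c <= 1) /\
  (forall v, \sum_(c | is_cycle E D c && on_cyc c v) y c <= 1).

Definition frac_util (R : realType) (V : finType) (n : nat) (org : V -> 'I_n)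
    (U : {set V}) (E : rel V) (D : nat) (y : cyc V -> R) (i : 'I_n) : R :=
  \sum_(c | is_cycle E D c) (gamma org U i c)%:R * y c.

(* Main.v *)
Require Import Defs.
From HB Require Import structures.
From mathcomp Require Import all_boot all_order all_algebra.
From mathcomp Require Import reals.
From mathcomp Require Import boolp zify ring lra.
Set Implicit Arguments. Unset Strict Implicit. Unset Printing Implicit Defensive.
Import Order.TTheory GRing.Theory Num.Theory.
Lemma sub_card1 (T : finType) (X Y : {set T}) :
  X \subset Y -> #|Y| = #|X|.+1 ->
  exists y, [/\ y \in Y, y \notin X & forall z, (z \in Y) = (z \in X) || (z == y)].
Proof.
move=> sXY hc.
have : #|Y :\: X| == 1%N.
  by rewrite cardsD (setIidPr sXY) hc subSnn.
case/cards1P=> y hy.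
have yYX : y \in Y :\: X by rewrite hy set11.
move: (yYX); rewrite inE => /andP[yX yY].
exists y; split=> // z.
case zX: (z \in X); first by rewrite (subsetP sXY).
case: (boolP (z \in Y)) => zY /=.
  have : z \in Y :\: X by rewrite inE zX zY.
  by rewrite hy inE.
by apply/esym/eqP=> zy; move: zY; rewrite zy yY.
Qed.

Lemma involution_even (T : finType) (rho : T -> T -> Prop) (S : {set T}) :
  (forall s t, rho s t -> rho t s) ->
  (forall s, s \in S -> exists t, [/\ t \in S, rho s t, t != s &
        forall t', t' \in S -> rho s t' -> t' != s -> t' = t]) ->
  ~~ odd #|S|.
Proof.
move=> hsym.
suff H : forall N (S : {set T}), (#|S| <= N)%N ->
  (forall s, s \in S -> exists t, [/\ t \in S, rho s t, t != s &
        forall t', t' \in S -> rho s t' -> t' != s -> t' = t]) ->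
  ~~ odd #|S| by apply: H.
elim=> [|N IH] {}S hN hS.
  by move: hN; rewrite leqn0 => /eqP ->.
case: (set_0Vmem S) => [->|[s sS]]; first by rewrite cards0.
have [t [tS rst ts ut]] := hS s sS.
set S' := S :\ s :\ t.
have cS : #|S| = (#|S'|.+2)%N.
  rewrite /S'.
  rewrite -[in LHS](setD1K sS) cardsU1 !inE eqxx /=.
  have tS' : t \in S :\ s by rewrite !inE ts.
  by rewrite -[in LHS](setD1K tS') cardsU1 !inE eqxx /=.
rewrite cS /= negbK.
apply: IH; first by move: hN; rewrite cS ltnS => /ltnW.
move=> u; rewrite /S' !inE => /and3P[ut' us uS].
have [v [vS ruv vu uv]] := hS u uS.
exists v; split=> //.
- rewrite !inE vS andbT; apply/andP; split.
  + apply/eqP=> vt; subst v.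
    have [w [wS rtw wt uw]] := hS t tS.
    have e1 := uw u uS (hsym _ _ ruv) ut'.
    have e2 := uw s sS (hsym _ _ rst) ltac:(by rewrite eq_sym).
    by move: us; rewrite e1 -e2 eqxx.
  + apply/eqP=> vs; subst v.
    have e1 := ut u uS (hsym _ _ ruv) us.
    by move: ut'; rewrite e1 eqxx.
- move=> t'; rewrite !inE => /and3P[_ _ t'S] rut' t'u; exact: uv.
Qed.

Section Ordinal.
Variables (m : nat) (C : finType) (c : 'I_m -> C -> nat) (slack : 'I_m -> C).
Hypotheses (hc : forall i, injective (c i)) (hsl : injective slack)
 (hlow : forall i x, x != slack i -> (c i (slack i) < c i x)%N)
 (hhigh : forall i j x, j != i -> (forall k, x != slack k) -> (c i x < c i (slack j))%N).

Definition ordb (O : {set C}) :=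
  #|O| = m /\ forall z, exists i, forall j, j \in O -> (c i z <= c i j)%N.
Definition ismin i (X : {set C}) j := j \in X /\ forall j', j' \in X -> (c i j <= c i j')%N.

Lemma ismin_uniq i X j1 j2 : ismin i X j1 -> ismin i X j2 -> j1 = j2.
Proof.
move=> [h1 m1] [h2 m2]; apply: (@hc i); apply/eqP; rewrite eqn_leq.
by rewrite m1 // m2.
Qed.

Lemma ismin_ex i (X : {set C}) x0 : x0 \in X -> exists j, ismin i X j.
Proof.
move=> x0X; case: (arg_minnP (c i) x0X) => j jX hj.
by exists j; split.
Qed.

Lemma ordb_inj O j i1 i2 : ordb O -> ismin i1 O j -> ismin i2 O j -> i1 = i2.
Proof.
move=> [cO dO] h1 h2.
have jO : j \in O by case: h1.
pose f i := [arg min_(x < j in O) c i x].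
have fmin i : ismin i O (f i).
  by rewrite /f; case: (arg_minnP (c i) jO) => x xO hx; split.
have im : f @: [set: 'I_m] = O.
  apply/setP=> x; apply/imsetP/idP.
    by case=> i _ ->; case: (fmin i).
  move=> xO; have [i hi] := dO x.
  exists i => //; apply: (ismin_uniq (i:=i) (X:=O)) => //; by split.
have : #|f @: [set: 'I_m]| == #|[set: 'I_m]| by rewrite im cO cardsT card_ord.
move/imset_injP=> finj.
apply: finj; rewrite ?inE //.
by rewrite (ismin_uniq (fmin i1) h1) (ismin_uniq (fmin i2) h2).
Qed.

Definition exc r := slack @: [set~ r].

Lemma card_exc r : #|exc r| = m.-1.
Proof. by rewrite card_imset // cardsC1 card_ord. Qed.

Lemma not_min_lt i (X : {set C}) z :
  ~ (forall j, j \in X -> (c i z <= c i j)%N) -> exists j, j \in X /\ (c i j < c i z)%N.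
Proof.
move=> h; apply: contrapT => h2; apply: h => j jX.
rewrite leqNgt; apply/negP => hj; apply: h2; by exists j.
Qed.

Lemma opivot O k : ordb O -> k \in O -> (forall r, O :\ k != exc r) ->
  exists k', [/\ k' \notin O, ordb (O :\ k :|: [set k']) &
     forall z, ordb (O :\ k :|: [set z]) -> z = k \/ z = k'].
Proof.
move=> hO kO hne.
have [cO dO] := hO.
have m0 : (0 < m)%N by rewrite -cO; apply/card_gt0P; exists k.
have cD : #|O :\ k| = m.-1 by move: cO; rewrite (cardsD1 k O) kO add1n => <-.
have DO : forall j, j \in O :\ k -> j \in O by move=> j; rewrite inE => /andP[].
have [i0 hi0] : exists i0, ismin i0 O k by have [i hi] := dO k; exists i.

have [x0 x0D] : exists x0, x0 \in O :\ k.
  case: (set_0Vmem (O :\ k)) => [D0|[x hx]]; last by exists x.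
  exfalso.
  move/negP: (hne i0); apply; apply/eqP; rewrite D0; apply/esym/cards0_eq.
  by rewrite card_exc -cD D0 cards0.
have [j' hj'] := ismin_ex i0 x0D.
have j'D : j' \in O :\ k by case: hj'.
have j'O := DO _ j'D.
have j'k : j' != k by move: j'D; rewrite !inE => /andP[h _].
have [i1 hi1] : exists i1, ismin i1 O j' by have [i hi] := dO j'; exists i.
have i10 : i1 != i0.
  apply/eqP=> e; subst i1; move/eqP: j'k; apply; exact: ismin_uniq hi1 hi0.
pose candb z := [forall i, (i != i1) ==> [exists j in O :\ k, (c i j < c i z)%N]].
have candE z i : candb z -> i != i1 -> exists j, j \in O :\ k /\ (c i j < c i z)%N.
  by move/forallP/(_ i)/implyP => h /h /existsP[j /andP[jD lt]]; exists j.
have cs : candb (slack i1).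
  apply/forallP => i; apply/implyP => ii1.
  apply/existsP; apply: contrapT => hno.
  have sub : O :\ k \subset exc i.
    apply/subsetP => j jD.
    have hj : (c i (slack i1) <= c i j)%N.
      by rewrite leqNgt; apply/negP => lt; apply: hno; exists j; rewrite jD lt.
    case: (boolP [exists k0, j == slack k0]) => [/existsP[k0 /eqP jk0]|nsl].
      subst j; apply: imset_f; rewrite !inE; apply/eqP => e; subst k0.
      have : slack i1 != slack i by apply: contra ii1 => /eqP /hsl ->.
      by move=> h; move: (hlow h); rewrite ltnNge hj.
    have := @hhigh i i1 j ltac:(by rewrite eq_sym).
    move=> H; exfalso.
    have nsl' : forall k0, j != slack k0 by move=> k0; move/existsP: nsl => nsl; apply/negP => /eqP e; apply: nsl; exists k0; rewrite e.
    by move: (H nsl'); rewrite ltnNge hj.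
  have : O :\ k == exc i by rewrite eqEcard sub card_exc cD leqnn.
  by rewrite (negbTE (hne i)).
case: (arg_maxnP (c i1) cs) => ks csk ksmax.
have K1 : forall z, candb z -> z \notin O /\ (c i1 z < c i1 j')%N.
  move=> z cz.
  have [i hi] := dO z.
  have ei : i = i1.
    apply/eqP; apply: contraT => ne.
    have [j [jD lt]] := candE z i cz ne.
    by move: (hi j (DO _ jD)); rewrite leqNgt lt.
  subst i.
  have zj' : z != j'.
    apply/eqP => e; subst z.
    have [j [jD lt]] := candE j' i0 cz ltac:(by rewrite eq_sym).
    by move: (hj'.2 j jD); rewrite leqNgt lt.
  have lt : (c i1 z < c i1 j')%N.
    rewrite ltn_neqAle (hi j' j'O) andbT; apply: contra zj' => /eqP e.
    by apply/eqP; apply: (@hc i1).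
  split=> //; apply/negP => zO.
  by move: (hi1.2 z zO); rewrite leqNgt lt.
have [ksO ksj'] := K1 ks csk.
exists ks; split=> //.
- split.
    rewrite setUC cardsU1 cD.
    have -> : ks \notin O :\ k by apply: contra ksO; apply: DO.
    by rewrite add1n prednK.
  move=> z; case: (boolP (candb z)) => cz.
    exists i1 => j; rewrite in_setU => /orP[jD | /set1P ->]; last exact: ksmax.
    have h1 := ksmax z cz.
    have h2 := hi1.2 j (DO _ jD).
    by apply: (leq_trans h1); apply: ltnW; apply: (leq_trans ksj').
  move: cz; rewrite /candb negb_forall => /existsP[i].
  rewrite negb_imply => /andP[ii1]; rewrite negb_exists_in => /forall_inP hall.
  exists i => j; rewrite in_setU => /orP[jD | /set1P ->].
    by rewrite leqNgt; apply: hall.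
  have [j0 [j0D lt]] := candE ks i csk ii1.
  have := hall j0 j0D; rewrite -leqNgt => le.
  by apply: ltnW; apply: (leq_trans _ lt); rewrite ltnS.
- move=> z [cO'' dO''].
  have hO'' : ordb (O :\ k :|: [set z]) by split.
  have zD : z \notin O :\ k.
    apply/negP => zD; move: cO''; rewrite setUC cardsU1 zD /= add0n cD.
    by move=> e; lia.
  have inO'' j : j \in O :\ k -> j \in O :\ k :|: [set z] by move=> jD; rewrite in_setU jD.
  have zO'' : z \in O :\ k :|: [set z] by rewrite in_setU set11 orbT.
  have [r [hr hrmin]] : exists r, (r == i0) || (r == i1) /\ ismin r (O :\ k :|: [set z]) z.
    case: (ltnP (c i0 z) (c i0 j')) => h0.
      exists i0; split; first by rewrite eqxx.
      split=> // j; rewrite in_setU => /orP[jD | /set1P ->] //.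
      by apply: ltnW; apply: (leq_trans h0); apply: hj'.2.
    have m0' : ismin i0 (O :\ k :|: [set z]) j'.
      split; first exact: inO''.
      by move=> j; rewrite in_setU => /orP[jD | /set1P ->] //; apply: hj'.2.
    exists i1; split; first by rewrite eqxx orbT.
    case: (ltnP (c i1 z) (c i1 j')) => h1.
      split=> // j; rewrite in_setU => /orP[jD | /set1P ->] //.
      by apply: ltnW; apply: (leq_trans h1); apply: hi1.2; apply: DO.
    exfalso; move/eqP: i10; apply.
    apply: (ordb_inj hO'' (j:=j')) => //.
    split; first exact: inO''.
    by move=> j; rewrite in_setU => /orP[jD | /set1P ->] //; apply: hi1.2; apply: DO.
  have hstar : forall i, i != r -> exists j, j \in O :\ k /\ (c i j < c i z)%N.
    move=> i ir.
    have nm : ~ (forall j, j \in O :\ k :|: [set z] -> (c i z <= c i j)%N).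
      move=> H; move/eqP: ir; apply; apply: (ordb_inj hO'' (j:=z)) => //.
    have [j [jO'' lt]] := not_min_lt nm.
    exists j; split=> //; move: jO''; rewrite in_setU => /orP[//|/set1P e].
    by move: lt; rewrite e ltnn.
  case/orP: hr => /eqP er; subst r.
  + left.
    have [i hi] := dO z.
    have ei : i = i0.
      apply/eqP; apply: contraT => ne.
      have [j [jD lt]] := hstar i ne.
      by move: (hi j (DO _ jD)); rewrite leqNgt lt.
    subst i.
    have h1 := hi k kO.
    have [i hi'] := dO'' k.
    have ei : i = i0.
      apply/eqP; apply: contraT => ne.
      have nm : ~ (forall j, j \in O -> (c i k <= c i j)%N).
        move=> H; move/eqP: ne; apply; apply: (ordb_inj hO (j:=k)) => //.
      have [j [jO lt]] := not_min_lt nm.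
      have jk : j != k by apply/eqP => e; move: lt; rewrite e ltnn.
      have jD : j \in O :\ k by rewrite !inE jk jO.
      by move: (hi' j (inO'' _ jD)); rewrite leqNgt lt.
    subst i.
    have h2 := hi' z zO''.
    apply: (@hc i0); apply/eqP; rewrite eqn_leq h1 h2 //.
  + right.
    have cz : candb z.
      apply/forallP => i; apply/implyP => ne.
      have [j [jD lt]] := hstar i ne.
      by apply/existsP; exists j; rewrite jD lt.
    have [i hi] := dO'' ks.
    have ei : i = i1.
      apply/eqP; apply: contraT => ne.
      have [j [jD lt]] := candE ks i csk ne.
      by move: (hi j (inO'' _ jD)); rewrite leqNgt lt.
    subst i.
    apply: (@hc i1); apply/eqP; rewrite eqn_leq; apply/andP; split; [exact: ksmax | exact: hi].
Qed.

End Ordinal.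

Local Open Scope ring_scope.


Lemma finite_min (T : finType) (P : pred T) (lt : T -> T -> Prop) x0 :
  P x0 -> (forall x y z, lt x y -> lt y z -> lt x z) -> (forall x, ~ lt x x) ->
  exists x, P x /\ forall y, P y -> ~ lt y x.
Proof.
move=> Px0 htr hirr.
pose preds x := [set y | P y && `[< lt y x >]].
case: (arg_minnP (fun x => #|preds x|) Px0) => x Px hx.
exists x; split=> // y Py lyx.
have sub : preds y \proper preds x.
  apply/properP; split.
    apply/subsetP => z; rewrite !inE => /andP[Pz /asboolP lzy].
    by rewrite Pz; apply/asboolP; apply: htr lzy lyx.
  exists y; rewrite !inE Py /=.
    by apply/asboolP.
  by apply/negP => /asboolP; apply: hirr.
by move: (hx y Py); rewrite leqNgt (proper_card sub).
Qed.

Lemma sum_delta (R : pzSemiRingType) (T : finType) (f : T -> R) j :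
  \sum_l (l == j)%:R * f l = f j.
Proof.
rewrite (bigD1 j) //= eqxx mul1r big1 ?addr0 // => l /negbTE ->.
by rewrite mul0r.
Qed.

Section Lex.
Variables (R : realFieldType) (m : nat).

Definition lexpos (f : 'I_m.+1 -> R) : Prop :=
  exists t, 0 < f t /\ forall t' : 'I_m.+1, (t' < t)%N -> f t' = 0.

Lemma lexpos_ext f g : (forall t, f t = g t) -> lexpos f -> lexpos g.
Proof. by move=> e [t [h1 h2]]; exists t; rewrite -e; split=> // t' /h2; rewrite e. Qed.

Lemma lexpos_add f g : lexpos f -> lexpos g -> lexpos (fun t => f t + g t).
Proof.
move=> [t1 [p1 z1]] [t2 [p2 z2]].
case: (ltngtP t1 t2) => h.
- exists t1; split; first by rewrite (z2 _ h) addr0.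
  by move=> t' lt; rewrite z1 // z2 ?addr0 //; apply: ltn_trans h.
- exists t2; split; first by rewrite (z1 _ h) add0r.
  by move=> t' lt; rewrite z1 ?z2 ?addr0 //; apply: ltn_trans h.
- have e : t1 = t2 by apply: val_inj.
  subst t2; exists t1; split; first by apply: addr_gt0.
  by move=> t' lt; rewrite z1 // z2 // addr0.
Qed.

Lemma lexpos_scale a f : 0 < a -> lexpos f -> lexpos (fun t => a * f t).
Proof.
move=> ha [t [p z]]; exists t; split; first by apply: mulr_gt0.
by move=> t' /z ->; rewrite mulr0.
Qed.

Lemma lexpos_opp f : lexpos f -> ~ lexpos (fun t => - f t).
Proof.
move=> [t1 [p1 z1]] [t2 [p2 z2]].
case: (ltngtP t1 t2) => h.
- by move: (z2 _ h) => /eqP; rewrite oppr_eq0 => /eqP e; move: p1; rewrite e ltxx.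
- by move: p2; rewrite (z1 _ h) oppr0 ltxx.
- have e : t1 = t2 by apply: val_inj.
  by subst t2; move: p2; rewrite oppr_gt0 ltNge (ltW p1).
Qed.

Lemma lexpos_ge0 f : lexpos f -> 0 <= f ord0.
Proof.
move=> [t [p z]]; case: (posnP t) => h.
  have -> : ord0 = t by apply: val_inj; rewrite /= h.
  exact: ltW.
by rewrite z.
Qed.

Lemma lexpos_ex f : lexpos f -> exists t, f t != 0.
Proof. by move=> [t [p _]]; exists t; rewrite gt_eqF. Qed.

Lemma lex_total f : (exists t, f t != 0) -> lexpos f \/ lexpos (fun t => - f t).
Proof.
move=> hex.
have hexn : exists n, (n < m.+1)%N && (f (inord n) != 0).
  by case: hex => t ht; exists t; rewrite ltn_ord inord_val ht.
case: (ex_minnP hexn) => n /andP[nm fn] hmin.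
have zero : forall t' : 'I_m.+1, (t' < n)%N -> f t' = 0.
  move=> t' lt; apply/eqP; apply: contraT => ne.
  have := hmin t'; rewrite ltn_ord inord_val ne => /(_ isT).
  by rewrite leqNgt lt.
case: (ltgtP (f (inord n)) 0) => [pos|neg|e]; last by move: fn; rewrite e eqxx.
- right; exists (inord n); split; first by rewrite oppr_gt0.
  by move=> t'; rewrite inordK // => /zero ->; rewrite oppr0.
- left; exists (inord n); split=> //.
  by move=> t'; rewrite inordK // => /zero.
Qed.

End Lex.

Section Cardinal.
Variables (R : realFieldType) (m : nat) (C : finType) (A : 'I_m -> C -> R) (b : 'I_m -> R).
Hypotheses (hA0 : forall r j, 0 <= A r j) (hAnz : forall j, exists r, A r j != 0).

Definition tgt (t : 'I_m.+1) (r : 'I_m) : R :=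
  if t == ord0 then b r else (t == lift ord0 r)%:R.

Definition rep (F : {set C}) (L : 'I_m.+1 -> C -> R) :=
  (forall t l, l \notin F -> L t l = 0) /\
  (forall t r, \sum_l L t l * A r l = tgt t r).

Definition indep (F : {set C}) := forall mu : C -> R,
  (forall l, l \notin F -> mu l = 0) -> (forall r, \sum_l mu l * A r l = 0) ->
  forall l, mu l = 0.

Definition lexfeas (F : {set C}) := #|F| = m /\ indep F /\
  exists L, rep F L /\ forall l, l \in F -> lexpos (fun t => L t l).

Definition wc (L : 'I_m.+1 -> C -> R) k l := \sum_r A r k * L (lift ord0 r) l.

Lemma tgt_lift r r' : tgt (lift ord0 r) r' = (r' == r)%:R.
Proof.
rewrite /tgt; have -> : (lift ord0 r == ord0) = false.
  by apply/negbTE; rewrite eq_sym neq_lift.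
by rewrite (inj_eq (@lift_inj _ ord0)) eq_sym.
Qed.

Lemma wcP F L k r' : rep F L -> \sum_l wc L k l * A r' l = A r' k.
Proof.
move=> [_ hs]; rewrite /wc.
under eq_bigr => l _ do rewrite mulr_suml.
rewrite exchange_big /=.
under eq_bigr => r _ do (under eq_bigr => l _ do rewrite -mulrA; rewrite -mulr_sumr hs tgt_lift).
by under eq_bigr => r _ do rewrite mulrC eq_sym; rewrite sum_delta.
Qed.

Lemma wc_supp F L k l : rep F L -> l \notin F -> wc L k l = 0.
Proof. by move=> [hz _] lF; rewrite /wc big1 // => r _; rewrite hz // mulr0. Qed.

Lemma sum_nu L k r (F : {set C}) : rep F L ->
  \sum_x ((x == k)%:R - wc L k x) * A r x = 0.
Proof.
move=> hr.
under eq_bigr => x _ do rewrite mulrBl.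
by rewrite sumrB sum_delta (wcP _ _ hr) subrr.
Qed.

Lemma delta_rep F L j : indep F -> rep F L -> j \in F -> forall l, wc L j l = (l == j)%:R.
Proof.
move=> hi hr jF l.
apply/eqP; rewrite -subr_eq0; apply/eqP; move: l.
apply: hi.
  move=> l lF; rewrite (@wc_supp F L j l hr lF).
  have -> : (l == j) = false by apply/negbTE; apply: contraNneq lF => ->.
  by rewrite subr0.
move=> r; under eq_bigr => x _ do rewrite mulrBl.
by rewrite sumrB (wcP _ _ hr) sum_delta subrr.
Qed.

Definition cond (F : {set C}) L k l := 0 < wc L k l /\
  forall l', l' \in F -> l' != l ->
    lexpos (fun t => L t l' - (wc L k l' / wc L k l) * L t l).

Lemma inF' (F : {set C}) l k x :
  (x \in F :\ l :|: [set k]) = ((x != l) && (x \in F)) || (x == k).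
Proof. by rewrite !inE. Qed.

Lemma feas_cond (F : {set C}) L k l : indep F -> rep F L ->
  (forall x, x \in F -> lexpos (fun t => L t x)) ->
  k \notin F -> l \in F -> lexfeas (F :\ l :|: [set k]) -> cond F L k l.
Proof.
move=> hi hr hrows kF lF [_ [_ [L' [hr' hrows']]]].
have [hz hs] := hr; have [hz' hs'] := hr'.
have wkk : wc L k k = 0 := wc_supp k hr kF.
have lk : l != k by apply: contraNneq kF => <-.
have key : forall t x, L t x - L' t x + L' t k * ((x == k)%:R - wc L k x) = 0.
  move=> t; apply: hi.
    move=> x xF; case: (eqVneq x k) => [->|xk].
      by rewrite wkk (hz _ _ kF) subr0 mulr1 sub0r addNr.
    have xF' : x \notin F :\ l :|: [set k] by rewrite inF' negb_or xk (negbTE xF) andbF.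
    by rewrite (wc_supp k hr xF) (hz _ _ xF) (hz' _ _ xF') !subrr mulr0 addr0.
  move=> r.
  under eq_bigr => x _ do rewrite mulrDl mulrBl -mulrA.
  by rewrite big_split sumrB /= hs hs' -mulr_sumr (sum_nu k r hr) mulr0 subrr addr0.
have lF' : l \notin F :\ l :|: [set k] by rewrite inF' eqxx /= (negbTE lk).
have kF' : k \in F :\ l :|: [set k] by rewrite inF' eqxx orbT.
have hLl : forall t, L t l = wc L k l * L' t k.
  move=> t; move: (key t l); rewrite (hz' _ _ lF') (negbTE lk) subr0 sub0r mulrN.
  by move/eqP; rewrite subr_eq0 => /eqP ->; rewrite mulrC.
have rowl := hrows l lF.
have rowk := hrows' k kF'.
have wpos : 0 < wc L k l.
  case: (ltgtP 0 (wc L k l)) => [//|neg|e].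
    exfalso; apply: (lexpos_opp rowl).
    apply: (lexpos_ext (f := fun t => (- wc L k l) * L' t k)).
      by move=> t; rewrite hLl mulNr.
    by apply: lexpos_scale => //; rewrite oppr_gt0.
  exfalso; case: rowl => t [p _]; move: p; rewrite hLl -e mul0r ltxx.
  done.
split=> // l' l'F l'l.
have l'k : l' != k by apply: contraNneq kF => <-.
have l'F' : l' \in F :\ l :|: [set k] by rewrite inF' l'l l'F.
apply: (lexpos_ext _ (hrows' l' l'F')) => t.
move: (key t l'); rewrite (negbTE l'k) sub0r => /eqP; rewrite addrC addrA addr_eq0 => /eqP.
move=> e; apply/esym.
have wne : wc L k l != 0 by rewrite gt_eqF.
rewrite hLl; rewrite opprK in e; rewrite -e.
by field.
Qed.

Lemma cond_uniq (F : {set C}) L k l1 l2 : l1 \in F -> l2 \in F -> cond F L k l1 -> cond F L k l2 -> l1 = l2.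
Proof.
move=> l1F l2F [p1 h1] [p2 h2]; case: (eqVneq l1 l2) => // ne; exfalso.
have q1 := @lexpos_scale _ _ (wc L k l2)^-1 _ ltac:(by rewrite invr_gt0) (h1 l2 l2F ltac:(by rewrite eq_sym)).
have q2 := @lexpos_scale _ _ (wc L k l1)^-1 _ ltac:(by rewrite invr_gt0) (h2 l1 l1F ne).
apply: (lexpos_opp q1); apply: (lexpos_ext _ q2) => t /=.
have n1 : wc L k l1 != 0 by rewrite gt_eqF.
have n2 : wc L k l2 != 0 by rewrite gt_eqF.
by field; rewrite n1 n2.
Qed.

Lemma cond_feas (F : {set C}) L k l : #|F| = m -> indep F -> rep F L ->
  (forall x, x \in F -> lexpos (fun t => L t x)) ->
  k \notin F -> l \in F -> cond F L k l -> lexfeas (F :\ l :|: [set k]).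
Proof.
move=> cF hi hr hrows kF lF [wpos hcond].
have [hz hs] := hr.
have wkk : wc L k k = 0 := wc_supp k hr kF.
have lk : l != k by apply: contraNneq kF => <-.
have wne : wc L k l != 0 by rewrite gt_eqF.
have kFl : k \notin F :\ l by rewrite !inE negb_and kF orbT.
split.
  rewrite setUC cardsU1 kFl add1n.
  by move: cF; rewrite (cardsD1 l F) lF add1n => <-.
split.
  move=> mu hmu hsmu.
  have hphi : forall x, mu x - mu k * ((x == k)%:R - wc L k x) = 0.
    apply: hi.
      move=> x xF; case: (eqVneq x k) => [->|xk].
        by rewrite wkk subr0 mulr1 subrr.
      have xF' : x \notin F :\ l :|: [set k] by rewrite inF' negb_or xk (negbTE xF) andbF.
      by rewrite (wc_supp k hr xF) hmu // subrr mulr0 subrr.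
    move=> r.
    under eq_bigr => x _ do rewrite mulrBl -mulrA.
    by rewrite sumrB hsmu -mulr_sumr (sum_nu k r hr) mulr0 subrr.
  have lF' : l \notin F :\ l :|: [set k] by rewrite inF' eqxx /= (negbTE lk).
  have muk : mu k = 0.
    move: (hphi l); rewrite (hmu _ lF') (negbTE lk) sub0r sub0r mulrN opprK.
    by move/eqP; rewrite mulf_eq0 (negbTE wne) orbF => /eqP.
  by move=> x; move: (hphi x); rewrite muk mul0r subr0.
exists (fun t x => L t x + (L t l / wc L k l) * ((x == k)%:R - wc L k x)).
split.
  split.
    move=> t x; rewrite inF' negb_or negb_and negbK => /andP[/orP[/eqP ->|xF] xk].
      by rewrite (negbTE lk) sub0r; field.
    by rewrite (negbTE xk) (wc_supp k hr xF) (hz _ _ xF) subrr mulr0 addr0.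
  move=> t r.
  under eq_bigr => x _ do rewrite mulrDl -mulrA.
  by rewrite big_split /= hs -mulr_sumr (sum_nu k r hr) mulr0 addr0.
move=> x; rewrite inF' => /orP[/andP[xl xF]|/eqP ->].
  have xk : x != k by apply: contraNneq kF => <-.
  apply: (lexpos_ext _ (hcond x xF xl)) => t.
  rewrite (negbTE xk) sub0r; by field.
apply: (lexpos_ext _ (@lexpos_scale _ _ (wc L k l)^-1 _ ltac:(by rewrite invr_gt0) (hrows l lF))) => t /=.
by rewrite eqxx wkk subr0 mulr1 (hz _ _ kF) add0r mulrC.
Qed.

Lemma cond_exists (F : {set C}) L k : indep F -> rep F L ->
  (forall x, x \in F -> lexpos (fun t => L t x)) ->
  k \notin F -> exists l, l \in F /\ cond F L k l.
Proof.
move=> hi hr hrows kF.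
have [hz hs] := hr.
have [l0 /andP[l0F l0p]] : exists l0, (l0 \in F) && (0 < wc L k l0).
  apply/existsP; apply: contraT; rewrite negb_exists => /forallP hall.
  have [r hr0] := hAnz k.
  have le : A r k <= 0.
    rewrite -(wcP k r hr); apply: sumr_le0 => l _.
    case: (boolP (l \in F)) => lF.
      apply: mulr_le0_ge0 => //.
      by move: (hall l); rewrite lF /= -leNgt.
    by rewrite (wc_supp k hr lF) mul0r.
  by move: hr0; rewrite eq_le le hA0.
pose P l := (l \in F) && (0 < wc L k l).
pose lt l1 l2 := lexpos (fun t => L t l2 / wc L k l2 - L t l1 / wc L k l1).
have [l [/andP[lF lp] lmin]] : exists l, P l /\ forall y, P y -> ~ lt y l.
  apply: (@finite_min _ P lt l0); first by rewrite /P l0F l0p.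
    move=> x y z hxy hyz; apply: (lexpos_ext _ (lexpos_add hyz hxy)) => t /=.
    by rewrite addrA subrK.
  by move=> x [t [p _]]; move: p; rewrite subrr ltxx.
exists l; split=> //; split=> // l' l'F l'l.
have wne : wc L k l != 0 by rewrite gt_eqF.
case: (ltP 0 (wc L k l')) => hl'.
  have ltl : lt l l'.
    have : exists t, L t l' / wc L k l' - L t l / wc L k l != 0.
      apply: contrapT => hall.
      have e : forall t, L t l' = (wc L k l' / wc L k l) * L t l.
        move=> t; have : L t l' / wc L k l' - L t l / wc L k l == 0.
          by apply/negPn/negP => ne; apply: hall; exists t.
        rewrite subr_eq0 => /eqP e.
        have wne' : wc L k l' != 0 by rewrite gt_eqF.
        have -> : L t l' = (L t l' / wc L k l') * wc L k l' by field.
        by rewrite e; field.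
      have d1 := delta_rep hi hr lF l'.
      have d2 := delta_rep hi hr lF l.
      move: d1; rewrite /wc.
      under eq_bigr => r _ do rewrite e mulrCA.
      rewrite -mulr_sumr -/(wc L l l) d2 eqxx (negbTE l'l) mulr1 => /eqP.
      by rewrite mulf_eq0 invr_eq0 (negbTE wne) orbF (gt_eqF hl').
    case/lex_total => // h.
    exfalso; apply: (lmin l'); first by rewrite /P l'F hl'.
    by apply: (lexpos_ext _ h) => t /=; rewrite opprB.
  apply: (lexpos_ext _ (lexpos_scale hl' ltl)) => t /=.
  have wne' : wc L k l' != 0 by rewrite gt_eqF.
  by field; rewrite wne wne'.
case: (ltgtP (wc L k l') 0) => [neg|pos|e]; [ | by move: hl'; rewrite leNgt pos | ]; last first.
  by apply: (lexpos_ext _ (hrows l' l'F)) => t; rewrite e mul0r mul0r subr0.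
have c0 : 0 < - (wc L k l' / wc L k l).
  by rewrite oppr_gt0 pmulr_llt0 ?invr_gt0.
apply: (lexpos_ext _ (lexpos_add (hrows l' l'F) (lexpos_scale c0 (hrows l lF)))) => t /=.
by rewrite mulNr.
Qed.
End Cardinal.

Section Slack.
Variables (R : realFieldType) (m : nat) (C : finType) (A : 'I_m -> C -> R) (b : 'I_m -> R)
  (slack : 'I_m -> C).
Hypotheses (hAs : forall r i, A r (slack i) = (r == i)%:R) (hsl : injective slack)
  (hb : forall r, 0 < b r).

Lemma sum_slack (f : C -> R) r : (forall l, l \notin slack @: setT -> f l = 0) ->
  \sum_l f l * A r l = f (slack r).
Proof.
move=> hf.
rewrite (bigID (mem (slack @: setT))) /= [X in _ + X]big1 ?addr0; last first.
  by move=> l /hf ->; rewrite mul0r.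
rewrite big_imset /=; last by move=> x y _ _; apply: hsl.
under eq_bigr => i _ do rewrite hAs mulrC eq_sym.
by rewrite (eq_bigl xpredT) ?sum_delta // => i; rewrite inE.
Qed.

Lemma slack_feas : lexfeas A b (slack @: setT).
Proof.
split; first by rewrite card_imset // cardsT card_ord.
split.
  move=> mu hmu hs.
  have hsl0 : forall r, mu (slack r) = 0 by move=> r; rewrite -(sum_slack r hmu) hs.
  move=> l; case: (boolP (l \in slack @: setT)) => [/imsetP[i _ ->]|/hmu] //.
pose L0 t l := \sum_i (l == slack i)%:R * tgt b t i.
have L0s : forall t i, L0 t (slack i) = tgt b t i.
  by move=> t i; rewrite /L0; under eq_bigr => i' _ do rewrite (inj_eq hsl) eq_sym; rewrite sum_delta.
have L0z : forall t l, l \notin slack @: setT -> L0 t l = 0.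
  move=> t l lF; rewrite /L0 big1 // => i _.
  have -> : (l == slack i) = false.
    by apply/negbTE; apply: contraNneq lF => ->; apply: imset_f.
  by rewrite mul0r.
exists L0; split.
  split=> // t r; rewrite (@sum_slack (L0 t) r (L0z t)); exact: L0s.
move=> l /imsetP[i _ ->]; exists ord0; split.
  by rewrite L0s /tgt eqxx.
by [].
Qed.
End Slack.

Theorem scarf (R : realFieldType) (m : nat) (C : finType) (A : 'I_m -> C -> R)
  (b : 'I_m -> R) (slack : 'I_m -> C) (c : 'I_m -> C -> nat) :
  (forall r j, 0 <= A r j) -> (forall j, exists r, A r j != 0) ->
  (forall r i, A r (slack i) = (r == i)%:R) -> (forall r, 0 < b r) ->
  (forall i, injective (c i)) ->
  (forall i x, x != slack i -> (c i (slack i) < c i x)%N) ->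
  (forall i j x, j != i -> (forall k, x != slack k) -> (c i x < c i (slack j))%N) ->
  exists x : C -> R, [/\ forall j, 0 <= x j, forall r, \sum_j x j * A r j = b r &
    forall z, exists i, forall j, x j != 0 -> (c i z <= c i j)%N].
Proof.
move=> hA0 hAnz hAs hb hc hlow hhigh.
have hsl : injective slack.
  move=> i1 i2 e; case: (eqVneq i1 i2) => // ne; exfalso.
  move: (hAs i1 i2) (hAs i1 i1); rewrite -e (negbTE ne) eqxx => ->.
  by move/eqP; rewrite eq_sym oner_eq0.
have slow : forall i j, (c i (slack i) <= c i j)%N.
  move=> i j; case: (eqVneq j (slack i)) => [->//|ne]; exact: ltnW (hlow _ _ ne).
suff [F [hF hO]] : exists F, lexfeas A b F /\ ordb c F.
  case: hF => _ [_ [L [[hz hs] hrows]]].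
  exists (L ord0); split.
  - move=> j; case: (boolP (j \in F)) => jF; first exact: lexpos_ge0 (hrows j jF).
    by rewrite hz.
  - by move=> r; rewrite hs /tgt eqxx.
  - move=> z; case: hO => _ /(_ z) [i hi]; exists i => j hj; apply: hi.
    by case: (boolP (j \in F)) => // jF; move: hj; rewrite hz ?eqxx.
case: (posnP m) => [m0|mpos].
  exists set0; split; last first.
    split; first by rewrite cards0 m0.
    by move=> z; have [r _] := hAnz z; exfalso; case: r => r; rewrite m0.
  split; first by rewrite cards0 m0.
  split; first by move=> mu hmu _ l; apply: hmu; rewrite inE.
  exists (fun _ _ => 0); split; last by move=> l; rewrite inE.
  split=> // t r; exfalso; case: r => r; by rewrite m0.
pose i0 : 'I_m := Ordinal mpos.
pose s0 := slack i0.
pose F0 := slack @: [set: 'I_m].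
apply: contrapT => hnt.
pose st (s : {set C} * {set C}) := [/\ lexfeas A b s.1, ordb c s.2, s0 \in s.1,
   s0 \notin s.2 & s.1 :\ s0 \subset s.2].
pose S := [set s | `[< st s >]].
have inS s : (s \in S) = `[< st s >] by rewrite inE.
have cardD (F : {set C}) : #|F| = m -> s0 \in F -> #|F :\ s0| = m.-1.
  by move=> cF s0F; move: cF; rewrite (cardsD1 s0 F) s0F add1n => <-.
have struct : forall F O, st (F, O) -> exists k, k \notin F /\ O = F :\ s0 :|: [set k].
  move=> F O [[cF _] [cO _] /= s0F s0O sub].
  have [y [yO yX hy]] := sub_card1 sub ltac:(by rewrite cO cardD // prednK).
  exists y; split.
    apply: contra yX => yF; rewrite !inE yF andbT.
    by apply: contraNneq s0O => <-.
  by apply/setP => z; rewrite hy in_setU in_set1.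
have cardS : ~~ odd #|S|.
  apply: (@involution_even _ (fun s t => s.2 = t.2)) => [s t ->//|[F O]].
  rewrite inS => /asboolP hst.
  have [k [kF eO]] := struct F O hst.
  case: hst => hF hO s0F s0O sub; rewrite /= in hO s0F s0O sub.
  have [cF [hi [L [hr hrows]]]] := hF.
  have [l [lF hcl]] := cond_exists hA0 hAnz hi hr hrows kF.
  have hF' := cond_feas cF hi hr hrows kF lF hcl.
  have ls0 : l != s0.
    apply/eqP => e; subst l; apply: hnt; exists (F :\ s0 :|: [set k]); split => //.
    by rewrite -eO.
  have kO : k \in O by rewrite eO in_setU set11 orbT.
  exists (F :\ l :|: [set k], O); split => //.
  - rewrite inS; apply/asboolP; split => //=.
      by rewrite inF' s0F andbT eq_sym ls0.
    apply/subsetP => x; rewrite !inE => /andP[xs0 /orP[/andP[xl xF]|/eqP ->//]].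
    by rewrite eO !inE xs0 xF.
  - apply/negP => /eqP [] e.
    by move: kF; rewrite -e inF' eqxx orbT.
  - move=> [F'' O'']; rewrite inS => /asboolP hst'' /= eO'' ne''; subst O''.
    case: hst'' => hF'' _ s0F'' _ sub''; rewrite /= in hF'' s0F'' sub''.
    have sFk : F'' \subset F :|: [set k].
      apply/subsetP => x xF''; case: (eqVneq x s0) => [->|xs0].
        by rewrite in_setU s0F.
      have : x \in O by apply: (subsetP sub''); rewrite !inE xs0.
      by rewrite eO !inE => /orP[/andP[_ ->]|->]; rewrite ?orbT.
    have cFk : #|F :|: [set k]| = #|F''|.+1.
      by rewrite setUC cardsU1 kF cF add1n; case: hF'' => ->.
    have [y [yFk yF'' hy]] := sub_card1 sFk cFk.
    case: (eqVneq y k) => [eyk|yk].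
      subst y; exfalso; move/eqP: ne''; apply; congr pair.
      apply/setP => z; case: (eqVneq z k) => [->|zk].
        by rewrite (negbTE kF) (negbTE yF'').
      by move: (hy z); rewrite in_setU in_set1 (negbTE zk) !orbF.
    have yF : y \in F by move: yFk; rewrite in_setU in_set1 (negbTE yk) orbF.
    have eF'' : F'' = F :\ y :|: [set k].
      apply/setP => z; rewrite inF'.
      case: (eqVneq z k) => [->|zk] /=; rewrite ?orbT ?orbF.
        by move: (hy k); rewrite in_setU set11 orbT eq_sym (negbTE yk) orbF.
      case: (eqVneq z y) => [->|zy] /=; first by rewrite (negbTE yF'').
      by move: (hy z); rewrite in_setU in_set1 (negbTE zk) (negbTE zy) !orbF.
    rewrite eF'' in hF''.
    have hcy := feas_cond hi hr hrows kF yF hF''.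
    by rewrite eF'' (cond_uniq yF lF hcy hcl).
pose S0 := [set s in S | s.1 == F0].
have inSD s : (s \in S :\: S0) = `[< st s >] && (s.1 != F0).
  by rewrite !inE; case: (`[< st s >]) => //=; rewrite andbT.
have nonexc : forall F O k, st (F, O) -> F != F0 -> k \notin F ->
    O = F :\ s0 :|: [set k] -> forall r, O :\ k != exc slack r.
  move=> F O k [_ _ /= s0F _ _] nF0 kF eO r.
  have hOk : O :\ k = F :\ s0.
    apply/setP => z; rewrite eO !inE; case: (eqVneq z k) => [->|_] /=;
      [by rewrite (negbTE kF) andbF | by rewrite orbF].
  rewrite hOk; apply/eqP => e.
  case: (eqVneq r i0) => [er|ne].
    subst r; move/eqP: nF0; apply; apply/setP => z.
    case: (eqVneq z s0) => [->|zs0]; first by rewrite s0F imset_f.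
    have : (z \in F :\ s0) = (z \in F) by rewrite !inE zs0.
    move=> <-; rewrite e; apply/imsetP/imsetP => [[j _ ->]|[j _ ezj]].
      by exists j.
    exists j => //; rewrite !inE; apply: contraNneq zs0 => ej.
    by rewrite ezj ej.
  have : s0 \in exc slack r by apply: imset_f; rewrite !inE eq_sym.
  by rewrite -e !inE eqxx.
have cardS' : ~~ odd #|S :\: S0|.
  apply: (@involution_even _ (fun s t => s.1 = t.1)) => [s t ->//|[F O]].
  rewrite inSD => /andP[/asboolP hst /= nF0].
  have [k [kF eO]] := struct F O hst.
  have hne := nonexc F O k hst nF0 kF eO.
  case: hst => hF hO s0F s0O sub; rewrite /= in hF hO s0F s0O sub.
  have kO : k \in O by rewrite eO in_setU set11 orbT.
  have hOk : O :\ k = F :\ s0.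
    apply/setP => z; rewrite eO !inE; case: (eqVneq z k) => [->|_] /=;
      [by rewrite (negbTE kF) andbF | by rewrite orbF].
  have [k' [k'O hO' huniq]] := opivot hc hsl hlow hhigh hO kO hne.
  have k's0 : k' != s0.
    apply/eqP => e; subst k'; apply: hnt; exists F; split => //.
    suff -> : F = O :\ k :|: [set s0] by [].
    by rewrite hOk setUC setD1K.
  exists (F, O :\ k :|: [set k']); split => //.
  - rewrite inSD nF0 andbT; apply/asboolP; split => //=.
      by rewrite !inE (negbTE s0O) andbF /= eq_sym.
    by rewrite hOk subsetUl.
  - apply/negP => /eqP [] e.
    by move: k'O; rewrite -e in_setU set11 orbT.
  - move=> [F'' O'']; rewrite inSD => /andP[/asboolP hst'' _] /= eF ne''; subst F''.
    have [z [zF eO'']] := struct F O'' hst''.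
    case: hst'' => _ hO'' _ _ _; rewrite /= in hO''.
    rewrite eO'' -hOk in hO''.
    case: (huniq z hO'') => ez; subst z.
      exfalso; move/eqP: ne''; apply; congr pair.
      by rewrite eO'' -hOk setUC setD1K.
    by rewrite eO'' -hOk.
have S0sub : S0 \subset S by apply/subsetP => s; rewrite inE => /andP[].
have F0feas : lexfeas A b F0 := slack_feas hAs hsl hb.
have cF0 : #|F0| = m by rewrite card_imset // cardsT card_ord.
have s0F0 : s0 \in F0 by apply: imset_f.
have hF0s0 : F0 :\ s0 = exc slack i0.
  apply/setP => z; rewrite !inE; apply/andP/imsetP.
    move=> [zs0 /imsetP[j _ ezj]]; exists j => //; rewrite !inE.
    by apply: contraNneq zs0 => ej; rewrite ezj ej.
  move=> [j]; rewrite !inE => ji0 ->; split; last exact: imset_f.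
  by apply: contraNneq ji0 => /hsl ->.
have c0 : #|S0| = 1%N.
  case: (boolP [exists x, [forall i, x != slack i]]) => [/existsP[x0 hx0] | hall]; last first.
    exfalso; apply: hnt; exists F0; split => //; split => // z.
    have [i ->] : exists i, z = slack i.
      move: hall; rewrite negb_exists => /forallP /(_ z); rewrite negb_forall.
      by case/existsP => i; rewrite negbK => /eqP ->; exists i.
    by exists i => j _; apply: slow.
  pose ns x := [forall i, x != slack i].
  case: (arg_maxnP (c i0) (hx0 : ns x0)) => kmax hkmax kmaxP.
  have nsP x : ns x -> forall i, x != slack i by move/forallP.
  pose O0 := exc slack i0 :|: [set kmax].
  have kmaxexc : kmax \notin exc slack i0.
    by apply/imsetP => [[j _ e]]; move: (nsP _ hkmax j); rewrite e eqxx.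
  have hO0 : ordb c O0.
    split.
      rewrite /O0 setUC cardsU1 kmaxexc (card_exc hsl) /=; have h : forall n, (0 < n)%N -> (1 + n.-1)%N = n by case. exact: (h _ mpos).
    move=> z; case: (boolP (ns z)) => nz.
      exists i0 => j; rewrite /O0 in_setU in_set1 => /orP[/imsetP[i' hi' ->]|/eqP ->].
        apply: ltnW; apply: hhigh; last exact: nsP.
        by move: hi'; rewrite !inE.
      exact: kmaxP.
    move: nz; rewrite /ns negb_forall => /existsP[i]; rewrite negbK => /eqP ->.
    by exists i => j _; apply: slow.
  have stO0 : st (F0, O0).
    split => //=.
      rewrite in_setU in_set1 negb_or; apply/andP; split.
        by rewrite -hF0s0 !inE eqxx.
      by apply/eqP => e; move: (nsP _ hkmax i0); rewrite -e eqxx.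
    by rewrite hF0s0 subsetUl.
  apply/eqP/cards1P; exists (F0, O0); apply/setP => [[F O]].
  rewrite !inE /=; apply/andP/eqP.
    move=> [/asboolP hst /eqP eF]; subst F.
    have [k [kF eO]] := struct F0 O hst.
    case: hst => _ hO _ _ _; rewrite /= in hO.
    have nsk : ns k by apply/forallP => i; apply: contraNneq kF => ->; apply: imset_f.
    have [i hi] := hO.2 kmax.
    have ei : i = i0.
      apply/eqP; apply: contraT => ne.
      have : slack i \in O by rewrite eO hF0s0 in_setU imset_f // !inE.
      move/(hi _); rewrite leqNgt hlow //; exact: nsP.
    subst i.
    have kO : k \in O by rewrite eO in_setU set11 orbT.
    have e : k = kmax.
      apply: (@hc i0); apply/eqP; rewrite eqn_leq; apply/andP; split; [exact: kmaxP | exact: hi].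
    by congr pair; rewrite eO e hF0s0.
  by case => -> ->; split; [apply/asboolP|].
have := cardS; rewrite -(cardsID S0 S) (setIidPr S0sub) c0 /=.
by rewrite (negbTE cardS').
Qed.

Local Close Scope ring_scope.
Lemma card_nat (T : finType) (P : pred T) : #|[set x | P x]| = \sum_x (P x : nat).
Proof.
rewrite -sum1_card big_mkcond /=; apply: eq_bigr => x _; rewrite inE.
by case: (P x).
Qed.

Lemma sum_on (T : finType) (e : rel T) (D : nat) W (X : {set cyc T}) v :
  exchange e D W X -> \sum_(c in X) (on_cyc c v : nat) = covered X v.
Proof.
move=> [_ hdisj]; case: (boolP (covered X v)) => [/existsP[c0 /andP[c0X on0]] | hnc].
  rewrite (bigD1 c0) //= on0 big1 // => c /andP[cX cc0].
  have := hdisj c c0 cX c0X cc0 v; rewrite on0 andbT => /negbTE -> //.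
rewrite big1 // => c cX; case: (boolP (on_cyc c v)) => // h.
by move: hnc; have -> // : covered X v by apply/existsP; exists c; rewrite cX h.
Qed.

Lemma util_sum (V : finType) n (org : V -> 'I_n) U (e : rel V) D W (X : {set cyc V}) i :
  exchange e D W X -> util org U i X = \sum_(c in X) gamma org U i c.
Proof.
move=> hX; rewrite /util /gamma card_nat.
under [RHS]eq_bigr => c _ do rewrite card_nat.
rewrite exchange_big /=; apply: eq_bigr => v _; rewrite andbA.
under eq_bigr => c _ do rewrite andbA.
by case: ((v \in U) && (org v == i)) => /=; [rewrite (sum_on v hX) | rewrite big1].
Qed.

Section App.
Variables (V : finType) (n : nat) (org : V -> 'I_n) (U : {set V}) (E : rel V) (D : nat).

Definition valid (p : {set 'I_n} * {set cyc V}) : bool :=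
  (p.1 != set0) && `[< exchange E D [set v | org v \in p.1] p.2 >].
Local Notation Col := {p | valid p}.

Lemma valid_slack i : valid ([set i], set0).
Proof.
rewrite /valid /=; apply/andP; split; first by apply/set0Pn; exists i; rewrite set11.
by apply/asboolP; split => [c|c1 c2]; rewrite inE.
Qed.

Definition aslack i : Col := exist _ ([set i], set0) (valid_slack i).
Definition ut i (j : Col) := util org U i (val j).2.
Definition tier i (j : Col) : nat :=
  if j == aslack i then 0 else if i \in (val j).1 then 1
  else if [exists k, j == aslack k] then 3 else 2.
Definition bigB := (#|{: Col}| + #|V|).+1.
Definition cc i (j : Col) := ((tier i j * bigB + ut i j) * bigB + enum_rank j)%N.

Lemma aslack_inj : injective aslack.
Proof.
move=> i1 i2 /(congr1 val) [] /setP /(_ i1); rewrite !inE eqxx => /esym/eqP.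
by [].
Qed.

Lemma ut_lt i j : (ut i j < bigB)%N.
Proof. rewrite /ut /bigB ltnS; apply: (leq_trans (max_card _)); exact: leq_addl. Qed.

Lemma rank_lt (j : Col) : (enum_rank j < bigB)%N.
Proof. rewrite /bigB ltnS; apply: (leq_trans (ltnW (ltn_ord _))); exact: leq_addr. Qed.

Lemma cc_inj i : injective (cc i).
Proof.
move=> j1 j2 e.
have : (cc i j1 %% bigB = cc i j2 %% bigB)%N by rewrite e.
rewrite /cc !modnMDl !modn_small ?rank_lt // => /val_inj.
exact: enum_rank_inj.
Qed.

Lemma cc_lo i j : (tier i j * bigB * bigB <= cc i j)%N.
Proof. rewrite /cc; nia. Qed.

Lemma cc_hi i j : (cc i j < (tier i j).+1 * bigB * bigB)%N.
Proof. have := ut_lt i j; have := rank_lt j; rewrite /cc; nia. Qed.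

Lemma tier0 i j : (tier i j == 0)%N = (j == aslack i).
Proof. by rewrite /tier; case: (j == aslack i); case: (i \in (val j).1); case: [exists k, j == aslack k]. Qed.

Lemma cc_low i x : x != aslack i -> (cc i (aslack i) < cc i x)%N.
Proof.
move=> ne; have t0 : tier i (aslack i) = 0%N by apply/eqP; rewrite tier0.
have t1 : (1 <= tier i x)%N by rewrite lt0n tier0.
have := cc_hi i (aslack i); have := cc_lo i x; rewrite t0; nia.
Qed.

Lemma cc_high i j x : j != i -> (forall k, x != aslack k) -> (cc i x < cc i (aslack j))%N.
Proof.
move=> ji nx.
have t3 : tier i (aslack j) = 3%N.
  rewrite /tier; have -> : (aslack j == aslack i) = false.
    by apply/negbTE; apply: contra ji => /eqP /aslack_inj ->.
  rewrite /= inE (negbTE (ltac:(by rewrite eq_sym) : i != j)).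
  by have -> : [exists k, aslack j == aslack k] by apply/existsP; exists j.
have t2 : (tier i x <= 2)%N.
  rewrite /tier (negbTE (nx i)); case: (i \in (val x).1) => //.
  by have -> : [exists k, x == aslack k] = false by apply/negbTE/existsPn => k; apply: nx.
have := cc_hi i x; have := cc_lo i (aslack j); rewrite t3; nia.
Qed.
End App.

Lemma colex (V : finType) n (org : V -> 'I_n) (E : rel V) D (j : {p | valid org E D p}) :
  exchange E D [set v | org v \in (val j).1] (val j).2.
Proof. by case/andP: (valP j) => _ /asboolP. Qed.

Lemma util0 (V : finType) n (org : V -> 'I_n) U i : util org U i set0 = 0%N.
Proof.
rewrite /util; apply/eqP; rewrite cards_eq0; apply/eqP/setP => v; rewrite !inE.
have -> : covered set0 v = false by apply/negbTE/existsP => [[c]]; rewrite inE.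
by rewrite !andbF.
Qed.

Theorem mainTheorem1 (R : realType) (V : finType) (n : nat)
    (org : V -> 'I_n) (U : {set V}) (E : rel V) (D : nat) :
  (forall v, ~~ E v v) -> (2 <= D)%N ->
  exists y : cyc V -> R,
    frac_exchange E D y /\
    forall (A : finType) (out : A -> V -> bool) (X : {set cyc (V + A)%type}),
      exchange (ext_graph E out) D [set: (V + A)%type] X ->
      (forall i : 'I_n,
         (Num.floor (frac_util org U E D y i) <= (util_ext org U i X)%:Z)%R) ->
      in_supp_core org U E D X.
Proof.
move=> hirr hD.
have := @scarf R n _ (fun r (j : {p | valid org E D p}) => ((r \in (val j).1) : bool)%:R%R)
  (fun _ => 1%R) (@aslack V n org E D) (@cc V n org U E D).
case.
- by move=> r j; rewrite ler0n.
- move=> j; have /set0Pn[r hr] : (val j).1 != set0 by case/andP: (valP j).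
  by exists r; rewrite hr oner_neq0.
- by move=> r i; rewrite /= inE.
- by move=> _; apply: ltr01.
- exact: cc_inj.
- exact: cc_low.
- exact: cc_high.
move=> x [hx0 hxs hdom].
pose y := (fun c => \sum_j x j * ((c \in (val j).2)%:R : R))%R.
have inner_v : forall (j : {p | valid org E D p}) v,
   (\sum_(c | is_cycle E D c && on_cyc c v) ((c \in (val j).2)%:R : R)
      <= (org v \in (val j).1)%:R)%R.
  move=> j v; have [hc hdisj] := colex j.
  case: (boolP [exists c, [&& is_cycle E D c, on_cyc c v & c \in (val j).2]]).
    case/existsP => c0 /and3P[cy0 on0 in0].
    rewrite (bigD1 c0) ?cy0 ?on0 //= in0 big1 ?addr0; last first.
      move=> c /andP[/andP[cy on] ne].
      have -> : (c \in (val j).2) = false.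
        apply/negP => cX; have := hdisj c c0 cX in0 ne v; by rewrite on on0.
      by [].
    have := (hc c0 in0).2 v on0; rewrite inE => -> //.
  move=> hno; rewrite big1 ?ler0n // => c /andP[cy on].
  have -> : (c \in (val j).2) = false.
    apply/negP => cX; apply: (negP hno); apply/existsP; exists c; by rewrite cy on cX.
  by [].
have vb : forall v, (\sum_(c | is_cycle E D c && on_cyc c v) y c <= 1)%R.
  move=> v; rewrite /y exchange_big /=.
  rewrite -[X in (_ <= X)%R](hxs (org v)); apply: ler_sum => j _.
  rewrite -mulr_sumr; apply: ler_wpM2l; first exact: hx0.
  exact: inner_v.
exists y; split.
  split => // c hcyc; apply/andP; split.
    by apply: sumr_ge0 => j _; apply: mulr_ge0 => //; apply: hx0.
  move: (hcyc) => /and4P[/existsP[v hv] _ _ _].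
  apply: le_trans (vb v).
  rewrite (bigD1 c) ?hcyc ?hv //= lerDl; apply: sumr_ge0 => c' _.
  by apply: sumr_ge0 => j _; apply: mulr_ge0 => //; apply: hx0.
move=> A out X hX hfl P hP [X' [hX' hlt]].
have vz : valid org E D (P, X') by rewrite /valid /= hP; apply/asboolP.
pose z : {p | valid org E D p} := exist _ (P, X') vz.
have [i hi] := hdom z.
have iP : i \in P.
  apply: contraT => iP.
  have tz : (2 <= tier i z)%N.
    rewrite /tier.
    have -> : (z == aslack org E D i) = false.
      apply/negbTE/negP => /eqP /(congr1 val) [] eP _.
      by move: iP; rewrite eP set11.
    rewrite /= (negbTE iP).
    by case: [exists k, z == aslack org E D k].
  have [j [xj ij]] : exists j, x j != 0%R /\ i \in (val j).1.
    apply: contrapT => h.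
    have : (\sum_j x j * ((i \in (val j).1) : bool)%:R = 0)%R.
      apply: big1 => j _; case: (eqVneq (x j) 0%R) => [->|ne]; first by rewrite mul0r.
      case: (boolP (i \in (val j).1)) => hij; last by rewrite mulr0.
      by exfalso; apply: h; exists j.
    by rewrite hxs => /eqP; rewrite oner_eq0.
  have tj : (tier i j <= 1)%N.
    by rewrite /tier; case: (j == aslack org E D i) => //; rewrite ij.
  have := hi j xj; have := cc_hi U i j; have := cc_lo U i z.
  move=> h1 h2 h3.
  have : (cc U i j < cc U i z)%N.
    apply: (leq_trans h2); apply: leq_trans h1; apply: leq_mul => //; apply: leq_mul => //.
    by apply: leq_trans tz; rewrite ltnS.
  by rewrite ltnNge h3.
have key : forall j, x j != 0%R -> i \in (val j).1 -> (ut U i z <= ut U i j)%N.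
  move=> j xj ij.
  case: (eqVneq z (aslack org E D i)) => [ez | nz].
    by rewrite ez /ut /= util0.
  have tz : tier i z = 1%N by rewrite /tier (negbTE nz) /= iP.
  have hj := hi j xj.
  case: (eqVneq j (aslack org E D i)) => [ej | nj].
    exfalso; have := cc_hi U i j; have := cc_lo U i z.
    have -> : tier i j = 0%N by apply/eqP; rewrite tier0 ej.
    rewrite tz; move: hj; nia.
  have tj : tier i j = 1%N by rewrite /tier (negbTE nj) ij.
  move: hj; rewrite /cc tz tj.
  have := rank_lt z; have := rank_lt j; have := ut_lt U i z; have := ut_lt U i j.
  nia.
have inner_u : forall (j : {p | valid org E D p}),
    (\sum_(c | is_cycle E D c) (gamma org U i c)%:R * ((c \in (val j).2)%:R : R)
      = (ut U i j)%:R)%R.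
  move=> j; have [hc _] := colex j.
  rewrite /ut (@util_sum V n org U E D _ _ i (colex j)) natr_sum.
  rewrite big_mkcond [RHS]big_mkcond; apply: eq_bigr => c _ /=.
  case: (boolP (c \in (val j).2)) => cX.
    by rewrite (hc c cX).1 mulr1.
  by rewrite mulr0; case: (is_cycle E D c).
have fu : ((ut U i z)%:R <= frac_util org U E D y i)%R.
  rewrite /frac_util /y.
  under eq_bigr => c _ do rewrite mulr_sumr.
  rewrite exchange_big /=.
  under eq_bigr => j _ do (under eq_bigr => c _ do rewrite mulrCA; rewrite -mulr_sumr inner_u).
  have e1 : ((ut U i z)%:R = \sum_j x j * ((i \in (val j).1)%:R * (ut U i z)%:R) :> R)%R.
    by under eq_bigr => j _ do rewrite mulrA; rewrite -mulr_suml hxs mul1r.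
  rewrite [X in (X <= _)%R]e1.
  apply: ler_sum => j _.
  case: (eqVneq (x j) 0%R) => [->|xj]; first by rewrite !mul0r.
  apply: ler_wpM2l; first exact: hx0.
  case: (boolP (i \in (val j).1)) => ij.
    by rewrite mul1r ler_nat; apply: key.
  by rewrite mul0r.
have h1 : ((ut U i z)%:Z <= Num.floor (frac_util org U E D y i))%R.
  by rewrite floor_ge_int -pmulrn.
have h2 := le_trans h1 (hfl i).
rewrite lez_nat /ut /= in h2.
have := leq_trans (hlt i iP) h2.
by rewrite ltnn.
Qed.
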